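(* For every integer $k\ge 2$ and every positive integer $n$, \[ \mathrm{ex}_3\big(n, C^{(3)}_{2k}\big)\le t_{2k}(n)+\mathrm{ex}(n,C_{2k}). \]
   Context: A Berge cycle of length $m$ in a hypergraph is a family of $m$ distinct hyperedges $H_0,\dots,H_{m-1}$ for which there exist distinct vertices $v_0,\dots,v_{m-1}$ with $\{v_i,v_{i+1}\}\subset H_i$ for $0\le i\le m-1$ (indices mod $m$). $\mathrm{ex}_3(n,C^{(3)}_m)$ is the maximum number of hyperedges in a 3-uniform hypergraph on $n$ vertices with no Berge cycle of length $m$. $\mathrm{ex}(n,C_{2k})$ is the maximum number of edges of a simple graph on $n$ vertices with no cycle of length $2k$. $t_\ell(n)$ is the maximum number of triangles in a simple graph on $n$ vertices containing no cycle of length $\ell$. *)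

(* Defs.v *)
From mathcomp Require Import all_boot.
Set Implicit Arguments. Unset Strict Implicit. Unset Printing Implicit Defensive.

Definition uniform3 n (F : {set {set 'I_n}}) : bool :=
  [forall e in F, #|e| == 3].

Definition simple_graph n (G : {set {set 'I_n}}) : bool :=
  [forall e in G, #|e| == 2].

Definition has_berge_cycle n m (F : {set {set 'I_n}}) : bool :=
  [exists H : {ffun 'I_m -> {set 'I_n}},
    [exists v : {ffun 'I_m -> 'I_n},
      [&& injectiveb H, injectiveb v &
          [forall i : 'I_m,
             [&& H i \in F, v i \in H i & v (ordS i) \in H i]]]]].

Definition has_cycle n m (G : {set {set 'I_n}}) : bool :=
  [exists v : {ffun 'I_m -> 'I_n},
    injectiveb v && [forall i : 'I_m, [set v i; v (ordS i)] \in G]].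

Definition triangles n (G : {set {set 'I_n}}) : nat :=
  #|[set T : {set 'I_n} | (#|T| == 3) &&
       [forall x in T, forall y in T, (x != y) ==> ([set x; y] \in G)]]|.

Definition ex3_berge n m : nat :=
  \max_(F : {set {set 'I_n}} | uniform3 F && ~~ has_berge_cycle m F) #|F|.

Definition ex_cycle n m : nat :=
  \max_(G : {set {set 'I_n}} | simple_graph G && ~~ has_cycle m G) #|G|.

Definition t_cycle n m : nat :=
  \max_(G : {set {set 'I_n}} | simple_graph G && ~~ has_cycle m G) triangles G.

(* Main.v *)
Require Import Defs.
From mathcomp Require Import all_boot zify.

Lemma ordS2 m (j : 'I_m) : 2 < m -> ordS (ordS j) != j.
Proof.
move=> m2; apply/eqP => /(congr1 val) /=.
have E x : x < m -> x.+1 %% m = (if x.+1 == m then 0 else x.+1).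
  move=> xm; case: eqP => [->|ne]; first exact: modnn.
  by rewrite modn_small //; lia.
have jm := ltn_ord j.
rewrite (E j jm); case: eqP => [e|ne].
  rewrite modn_small; lia.
rewrite E; last lia.
case: eqP; lia.
Qed.

Section S.
Variable n : nat.
Implicit Type F : {set {set 'I_n}}.

Definition matchb F (M : {set {set 'I_n} * {set 'I_n}}) :=
  [forall p in M, [&& p.1 \in F, p.2 \subset p.1 & #|p.2| == 2]] &&
  [forall p in M, forall q in M, ((p.1 == q.1) || (p.2 == q.2)) ==> (p == q)].

Lemma match_exists F : exists M, [/\ matchb F M &
  forall h e : {set 'I_n}, h \in F -> e \subset h -> #|e| == 2 ->
   (exists2 p, p \in M & p.1 = h) \/ (exists2 p, p \in M & p.2 = e)].
Proof.
have M0 : matchb F set0.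
  by apply/andP; split; apply/forallP => p; rewrite in_set0.
case: (arg_maxnP (fun M : {set {set 'I_n} * {set 'I_n}} => #|M|) M0) => M MM Mmax.
exists M; split => // h e hF eh e2.
case: (boolP [exists p in M, p.1 == h]) => [/existsP[p /andP[pM /eqP]]|nh].
  by left; exists p.
case: (boolP [exists p in M, p.2 == e]) => [/existsP[p /andP[pM /eqP]]|ne].
  by right; exists p.
exfalso.
have nhe : (h, e) \notin M.
  by apply: contra nh => he; apply/existsP; exists (h, e); rewrite he /=.
have : matchb F ((h, e) |: M).
  case/andP: MM => /forallP M1 /forallP M2.
  apply/andP; split; apply/forallP => p; apply/implyP; rewrite in_setU1.
    case/predU1P => [-> /=|pM]; first by rewrite hF eh e2.
    exact: (implyP (M1 p)).
  case/predU1P => [->|pM]; apply/forall_inP => q; rewrite in_setU1.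
    case/predU1P => [->|qM]; first by rewrite !eqxx.
    apply/implyP => /= /orP[/eqP qh|/eqP qe].
      by case/negP: nh; apply/existsP; exists q; rewrite qM -qh /=.
    by case/negP: ne; apply/existsP; exists q; rewrite qM -qe /=.
  case/predU1P => [->|qM]; last first.
    exact: (forall_inP (implyP (M2 p) pM) q qM).
  apply/implyP => /= /orP[/eqP qh|/eqP qe].
    by case/negP: nh; apply/existsP; exists p; rewrite pM qh /=.
  by case/negP: ne; apply/existsP; exists p; rewrite pM qe /=.
move/Mmax; rewrite cardsU1 nhe /=; lia.
Qed.

Lemma key m F : 2 < m -> uniform3 F -> ~~ has_berge_cycle m F ->
  exists G : {set {set 'I_n}}, [/\ simple_graph G, ~~ has_cycle m G &
     #|F| <= triangles G + #|G|].
Proof.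
move=> m2 u3 nB.
have [M [/andP[/forallP M1' /forallP M2'] Mmax]] := match_exists F.
have M1 p : p \in M -> [/\ p.1 \in F, p.2 \subset p.1 & #|p.2| == 2].
  by move=> pM; case/and3P: (implyP (M1' p) pM).
have M2 p q : p \in M -> q \in M -> (p.1 == q.1) || (p.2 == q.2) -> p = q.
  by move=> pM qM /(implyP (forall_inP (implyP (M2' p) pM) q qM)) /eqP.
pose G := [set p.2 | p in M].
pose H1 := [set p.1 | p in M].
exists G; split.
- apply/forall_inP => e /imsetP[p pM ->]; by case: (M1 p pM).
- apply/negP => /existsP[v /andP[/injectiveP vinj /forallP vG]].
  pose e i := [set v i; v (ordS i)].
  pose H := [ffun i => odflt set0 [pick h | (h, e i) \in M]].
  have HM i : (H i, e i) \in M.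
    rewrite ffunE; case: pickP => [h /= -> //|none].
    have /imsetP[p pM pe] := vG i.
    by move: (none p.1); rewrite /= /e pe -surjective_pairing pM.
  have einj : injective e.
    move=> i j eij.
    have : v i \in e j by rewrite -eij set21.
    case/set2P => [/vinj //|/vinj ij].
    have : v (ordS i) \in e j by rewrite -eij set22.
    case/set2P => [/vinj ij'|/vinj /ordS_inj //].
    by case/negP: (@ordS2 _ j m2); rewrite -ij ij'.
  case/negP: nB; apply/existsP; exists H; apply/existsP; exists v.
  apply/and3P; split.
  + apply/injectiveP => i j Hij.
    have := M2 _ _ (HM i) (HM j); rewrite /= Hij eqxx => /(_ isT) [].
    exact: einj.
  + exact/injectiveP.
  + apply/forallP => i; case: (M1 _ (HM i)) => /= HF /subsetP eH _.
    by rewrite HF !eH ?set21 ?set22.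
- have cG : #|G| = #|M|.
    apply: card_in_imset => p q pM qM pq; apply: M2 => //; by rewrite pq eqxx orbT.
  have cH : #|H1| = #|M|.
    apply: card_in_imset => p q pM qM pq; apply: M2 => //; by rewrite pq eqxx.
  have sF : F \subset H1 :|: (F :\: H1).
    by apply/subsetP => x xF; rewrite in_setU in_setD xF andbT; case: (x \in H1).
  apply: (leq_trans (subset_leq_card sF)); apply: (leq_trans (leq_card_setU _ _)).
  rewrite cH -cG addnC leq_add2r.
  apply: subset_leq_card; apply/subsetP => h; rewrite in_setD => /andP[nh hF].
  rewrite inE (forall_inP u3 h hF) /=.
  apply/forall_inP => x xh; apply/forall_inP => y yh; apply/implyP => xy.
  have sub : [set x; y] \subset h by apply/subsetP => z /set2P[->|->].
  have c2 : #|[set x; y]| == 2 by rewrite cards2 xy.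
  case: (Mmax h _ hF sub c2) => [[p pM p1]|[p pM p2]].
    by case/negP: nh; rewrite -p1; apply: imset_f.
  by rewrite -p2; apply: imset_f.
Qed.
End S.

Theorem theorem2 (k n : nat) (hk : 2 <= k) (hn : 0 < n) :
  ex3_berge n (2 * k) <= t_cycle n (2 * k) + ex_cycle n (2 * k).
Proof.
apply/bigmax_leqP => F /andP[u3 nB].
have m2 : 2 < 2 * k by lia.
have [G [sG nC le]] := @key n _ _ m2 u3 nB.
apply: (leq_trans le); apply: leq_add.
  by apply: (leq_bigmax_cond (P := fun G => simple_graph G && ~~ has_cycle (2 * k) G)); rewrite sG nC.
by apply: (leq_bigmax_cond (P := fun G => simple_graph G && ~~ has_cycle (2 * k) G)); rewrite sG nC.
Qed.
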